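(* Let $k$ be a field of characteristic $p\ge5$ and $U_k=\operatorname{Spec}k[e_2,e_4,e_6,(e_4^3-e_6^2)^{-1}]$. Then $R^p\in H^0(U_k,\mathcal{T}_{U_k})$ is not of the form $g\cdot R$ for any $g\in H^0(U_k,\mathcal{O}_{U_k})$; that is, the $p$-curvature of the foliation generated by $R$ on $U_k$ is nonzero.
   Context: $R = \frac{e_2^2-e_4}{12}\frac{\partial}{\partial e_2} + \frac{e_2e_4-e_6}{3}\frac{\partial}{\partial e_4} + \frac{e_2e_6-e_4^2}{2}\frac{\partial}{\partial e_6}$ is the Ramanujan vector field, and $R^p$ is its $p$-fold composite as a derivation (again a derivation in characteristic $p$). *)

(* Defs.v *)
From HB Require Import structures.
From mathcomp Require Import all_boot all_order all_algebra.
From mathcomp Require Import fraction.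
From mathcomp Require Import mpoly.
Set Implicit Arguments. Unset Strict Implicit. Unset Printing Implicit Defensive.
Import GRing.Theory.
Local Open Scope ring_scope.

Notation "x %:F" := (@FracField.tofrac _ x) : ring_scope.

Definition i2 : 'I_3 := @Ordinal 3 0 isT.
Definition i4 : 'I_3 := @Ordinal 3 1 isT.
Definition i6 : 'I_3 := @Ordinal 3 2 isT.

Definition e2 (k : fieldType) : {mpoly k[3]} := 'X_i2.
Definition e4 (k : fieldType) : {mpoly k[3]} := 'X_i4.
Definition e6 (k : fieldType) : {mpoly k[3]} := 'X_i6.

Definition Disc (k : fieldType) : {mpoly k[3]} := e4 k ^+ 3 - e6 k ^+ 2.

(* The Ramanujan vector field R, acting as a derivation on k[e2,e4,e6]
   (it preserves this subring of O(U_k) = k[e2,e4,e6][Delta^-1]). *)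
Definition ramanujan (k : fieldType) (f : {mpoly k[3]}) : {mpoly k[3]} :=
  ((12%:R : k)^-1)%:MP * (e2 k ^+ 2 - e4 k) * mderiv i2 f
  + ((3%:R : k)^-1)%:MP * (e2 k * e4 k - e6 k) * mderiv i4 f
  + ((2%:R : k)^-1)%:MP * (e2 k * e6 k - e4 k ^+ 2) * mderiv i6 f.

(* O(U_k) = k[e2,e4,e6][Delta^-1], realized inside the fraction field
   Frac(k[e2,e4,e6]) as the elements h / Delta^n. *)
Definition in_OU (k : fieldType) (g : {fraction {mpoly k[3]}}) : Prop :=
  exists (h : {mpoly k[3]}) (n : nat), g = h%:F / (Disc k ^+ n)%:F.

(* Main.v *)
Require Import Defs.
From HB Require Import structures.
From mathcomp Require Import all_boot all_order all_algebra.
From mathcomp Require Import fraction.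
From mathcomp Require Import mpoly.
From mathcomp Require Import ring.
Set Implicit Arguments. Unset Strict Implicit.
Import GRing.Theory.
Local Open Scope ring_scope.

Section S.
Variable k : fieldType.
Hypothesis h2 : (2%:R : k) != 0.
Hypothesis h3 : (3%:R : k) != 0.

Definition Pt : 'I_3 -> k := fun _ => 1.
Definition ev (f : {mpoly k[3]}) := f.@[Pt].
Definition d (j : 'I_3) (f : {mpoly k[3]}) := ev (f^`M(j)).

Lemma dX (i j : 'I_3) : ('X_j : {mpoly k[3]})^`M(i) = ((i == j)%:R)%:MP.
Proof.
rewrite mderivX mnm1E eq_sym; case: eqP => [->|_].
  have ->: forall m : 'X_{1..3}, (m - m = 0)%MM by move=> m; apply/mnmP=> l; rewrite mnmBE subnn mnm0E.
  by rewrite mpolyX0 scale1r.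
by rewrite scale0r.
Qed.

Lemma evX (i : 'I_3) : ev 'X_i = 1.
Proof. by rewrite /ev mevalXU. Qed.

Lemma dXv (i j : 'I_3) : d i 'X_j = (i == j)%:R.
Proof. by rewrite /d dX /ev mevalC. Qed.

Definition C2 : {mpoly k[3]} := ((12%:R : k)^-1)%:MP * (e2 k ^+ 2 - e4 k).
Definition C4 : {mpoly k[3]} := ((3%:R : k)^-1)%:MP * (e2 k * e4 k - e6 k).
Definition C6 : {mpoly k[3]} := ((2%:R : k)^-1)%:MP * (e2 k * e6 k - e4 k ^+ 2).

Lemma ramE f : ramanujan f = C2 * f^`M(i2) + C4 * f^`M(i4) + C6 * f^`M(i6).
Proof. by []. Qed.

Ltac evs := rewrite /d /ev ?expr2 ?(mderivD, mderivB, mderivN, mderiv_mulC, mderivM, dX, mderivC) ?(mevalM, mevalD, mevalB, mevalN, mevalC, mevalXU, meval0).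

Lemma evC2 : ev C2 = 0. Proof. rewrite /C2 /e2 /e4; evs; rewrite /Pt; by rewrite mulr1 subrr mulr0. Qed.
Lemma evC4 : ev C4 = 0. Proof. rewrite /C4 /e2 /e4 /e6; evs; rewrite /Pt; by rewrite mulr1 subrr mulr0. Qed.
Lemma evC6 : ev C6 = 0. Proof. rewrite /C6 /e2 /e4 /e6; evs; rewrite /Pt; by rewrite mulr1 subrr mulr0. Qed.

Lemma evR f : ev (ramanujan f) = 0.
Proof.
have := evC2; have := evC4; have := evC6; rewrite /ev => z6 z4 z2.
rewrite ramE; move: z2 z4 z6; generalize C2 C4 C6 => a b c za zb zc.
rewrite !(mevalD, mevalM) za zb zc.
by rewrite !mul0r !addr0.
Qed.

Lemma dR j f : d j (ramanujan f) =
  d j C2 * d i2 f + d j C4 * d i4 f + d j C6 * d i6 f.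
Proof.
have := evC2; have := evC4; have := evC6; rewrite /ev => z6 z4 z2.
rewrite ramE /d /ev; move: z2 z4 z6; generalize C2 C4 C6 => a b c za zb zc.
rewrite !(mderivD, mderivM) !(mevalD, mevalM) za zb zc.
by rewrite !mul0r !addr0.
Qed.

Ltac dc := rewrite /C2 /C4 /C6 /e2 /e4 /e6; evs; rewrite /Pt /=; first [ring | by field].

Lemma dR2 f : d i2 (ramanujan f) = 12^-1 * 2 * d i2 f + 3^-1 * d i4 f + 2^-1 * d i6 f.
Proof. rewrite dR; congr (_ * _ + _ * _ + _ * _); dc. Qed.
Lemma dR4 f : d i4 (ramanujan f) = - 12^-1 * d i2 f + 3^-1 * d i4 f + (-1) * d i6 f.
Proof. rewrite dR; congr (_ * _ + _ * _ + _ * _); dc. Qed.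
Lemma dR6 f : d i6 (ramanujan f) = 0 * d i2 f + - 3^-1 * d i4 f + 2^-1 * d i6 f.
Proof. rewrite dR; congr (_ * _ + _ * _ + _ * _); dc. Qed.
Lemma i12 : (12%:R : k)^-1 = 2^-1 * 2^-1 * 3^-1.
Proof. by rewrite -!invfM -!natrM. Qed.

Lemma iter2 n f :
  let a := (2%:R : k)^-1 in let b := (3%:R : k)^-1 in
  let F := iter n.+2 (@ramanujan k) f in
  [/\ d i2 F = 0,
      d i4 F = - (a^+3 * b) * d i2 f + 5%:R * a^+2 * b * d i4 f - 7%:R * a^+3 * d i6 f
    & d i6 F = a^+2 * b^+2 * d i2 f - 5%:R * a * b^+2 * d i4 f + 7%:R * a^+2 * b * d i6 f].
Proof.
move=> a b; elim: n f => [|n IH] f F.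
  rewrite /F /=; split; rewrite ?(dR2, dR4, dR6) ?i12 /a /b; try field; by rewrite ?h2 ?h3.
rewrite /F iterSr; have [A B C] := IH (ramanujan f).
split; rewrite ?A ?B ?C ?(dR2, dR4, dR6) ?i12 /a /b; try field; by rewrite ?h2 ?h3.
Qed.
Lemma d2M j F G : ev F = 0 -> ev G = 0 ->
  ev ((F * G)^`M(j)^`M(j)) = 2%:R * d j F * d j G.
Proof.
rewrite /d /ev => hF hG.
rewrite !mderivM !mderivD !mderivM !mevalD !mevalM hF hG; ring.
Qed.
End S.

Theorem corollary2p5 (k : fieldType) (p : nat) :
  p \in [pchar k] -> (5 <= p)%N ->
  ~ (exists g : {fraction {mpoly k[3]}},
        in_OU g /\
        forall i : 'I_3,
          (iter p (@ramanujan k) 'X_i)%:F = g * (ramanujan 'X_i)%:F).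
Proof.
move=> Hp Hp5 [g [_ Hg]].
have nz n : (0 < n < p)%N -> (n%:R : k) != 0.
  move=> /andP [n0 np]; rewrite -(dvdn_pcharf Hp); apply/negP => /dvdn_leq.
  by rewrite n0 => /(_ isT); rewrite leqNgt np.
have h2 : (2%:R : k) != 0 by apply: nz; rewrite /=; apply: leq_trans Hp5.
have h3 : (3%:R : k) != 0 by apply: nz; rewrite /=; apply: leq_trans Hp5.
have h6 : (6%:R : k) != 0.
  by rewrite (_ : 6 = 2 * 3)%N // natrM mulf_neq0.
set F2 := iter p (@ramanujan k) 'X_i2.
set F4 := iter p (@ramanujan k) 'X_i4.
set G2 := ramanujan ('X_i2 : {mpoly k[3]}).
set G4 := ramanujan ('X_i4 : {mpoly k[3]}).
have E : F2 * G4 = F4 * G2.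
  apply/eqP; rewrite -tofrac_eq !tofracM Hg Hg; apply/eqP.
  by rewrite mulrAC.
have [n pn] : exists n, p = n.+2 by case: (p) Hp5 => [|[|m]] // _; exists m.
have evF f : ev (iter p (@ramanujan k) f) = 0 by rewrite pn /= evR.
have := congr1 (fun q => ev (q^`M(i4)^`M(i4))) E => /=.
rewrite !d2M ?evF ?evR //.
have [_ A2 _] := iter2 h2 h3 n 'X_i2.
have [_ A4 _] := iter2 h2 h3 n 'X_i4.
rewrite /F2 /F4 pn A2 A4 /G2 /G4 !dR4 // => e.
move: e; rewrite !dXv !eqxx i12 /=.
set L := (X in X = _); set R := (X in _ = X) => e.
have h : (6%:R : k) = 144%:R * (L - R).
  rewrite /L /R; field; by rewrite ?h2 ?h3.
by move: h6; rewrite h e subrr mulr0 eqxx.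
Qed.
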